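(* Let $(\theta_1,\mathbf{X}_1),\dots,(\theta_B,\mathbf{X}_B)$ be i.i.d. with $\theta_b \sim r$, where $r$ has a density with $r(\theta)>0$ on $\Theta$, and $\mathbf{X}_b\mid\theta_b$ distributed according to the statistical model at $\theta_b$. Let $\mathcal{A}_B$ be the (data-dependent) partition of $\Theta$ produced by TRUST or TRUST++ from these simulations, and for $\theta'\in\Theta$ let $A(\theta')$ be its element containing $\theta'$, $I_{A(\theta')} = \{b : \theta_b \in A(\theta')\}$, $$\widehat H_B(t\mid\theta') = \frac{1}{|I_{A(\theta')}|+1}\Big(\sum_{b\in I_{A(\theta')}}\mathbb{I}\big(\tau(\mathbf{X}_b,\theta_b)\le t\big)+1\Big),$$ $\widehat C_{\theta',B} = \inf\{t:\widehat H_B(t\mid\theta')\ge\alpha\}$, and $\widehat R_B(\mathbf{X}) = \{\theta'\in\Theta : \tau(\mathbf{X},\theta')\ge \widehat C_{\theta',B}\}$. Assume the uniform consistency condition: for every $\varepsilon>0$ and $\delta>0$ there is $B_0$ such that for all $B\ge B_0$, $$\mathbb{P}\Big(\sup_{t\in\mathbb{R},\,\theta'\in\Theta}\big|\widehat H_B(t\mid\theta') - H(t\mid\theta')\big|\le\varepsilon\Big)\ge 1-\delta.$$ Then for every fixed $\theta\in\Theta$, with $\mathbf{X}$ drawn from the model at $\theta$ independently of the simulations, $$\lim_{B\to\infty}\mathbb{P}\big(\theta\in\widehat R_B(\mathbf{X})\mid\theta\big) = 1-\alpha.$$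
   Context: A statistical model gives, for each parameter $\theta\in\Theta$, a distribution of the data $\mathbf{X}\in\mathcal{X}$; $\alpha\in(0,1)$. A fixed measurable function $\tau:\mathcal{X}\times\Theta\to\mathbb{R}$ (a test statistic) is given; $H(t\mid\theta) := \mathbb{P}(\tau(\mathbf{X},\theta)\le t\mid\theta)$ is continuous in $t$ for every $\theta$. TRUST: a regression tree is fit with input $\theta$ and response $\tau(\mathbf{X},\theta)$ on the pairs $(\theta_b,\tau(\mathbf{X}_b,\theta_b))$; its leaves form a partition of $\Theta$. TRUST++: $K$ such regression trees are fit on bootstrap resamples of the simulated data, and two parameters $\theta,\theta'$ are placed in the same partition element iff they fall in the same leaf in all $K$ trees. In both cases the partition has the property that $\widehat H_B(\cdot\mid\theta') = \widehat H_B(\cdot\mid\theta)$ whenever $\theta'\in A(\theta)$. *)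

(* Defs.v *)
From HB Require Import structures.
From mathcomp Require Import all_boot all_order all_algebra.
From mathcomp Require Import all_classical all_reals all_analysis.
Set Implicit Arguments. Unset Strict Implicit. Unset Printing Implicit Defensive.
Import Order.TTheory GRing.Theory Num.Theory.
Import numFieldNormedType.Exports.
Local Open Scope classical_set_scope.
Local Open Scope ring_scope.

Section TRUST.
Context {R : realType} {dT dX dO : measure_display}
  {Theta : measurableType dT} {Xsp : measurableType dX} {Omega : measurableType dO}.

Definition Hcdf (model : R.-pker Theta ~> Xsp) (tau : Xsp -> Theta -> R)
  (theta : Theta) (t : R) : R :=
  fine (model theta [set x | tau x theta <= t]).

(* Cell-membership in the partition A_B : two parameters are in the same
   element iff they receive the same cell label. *)
Definition Hhat (tau : Xsp -> Theta -> R) (cell : Theta -> nat)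
  (sims : seq (Theta * Xsp)) (theta' : Theta) (t : R) : R :=
  ((count (fun z => (cell z.1 == cell theta') && (tau z.2 z.1 <= t)) sims)%:R + 1)
  / ((count (fun z => cell z.1 == cell theta') sims)%:R + 1).

Definition Chat (alpha : R) (tau : Xsp -> Theta -> R) (cell : Theta -> nat)
  (sims : seq (Theta * Xsp)) (theta' : Theta) : \bar R :=
  ereal_inf (EFin @` [set t | alpha <= Hhat tau cell sims theta' t]).

Definition Rhat (alpha : R) (tau : Xsp -> Theta -> R) (cell : Theta -> nat)
  (sims : seq (Theta * Xsp)) (x : Xsp) : set Theta :=
  [set theta' | (Chat alpha tau cell sims theta' <= (tau x theta')%:E)%E].

Definition first_sims (Z : nat -> Omega -> Theta * Xsp) (B : nat) (w : Omega)
  : seq (Theta * Xsp) := [seq Z b w | b <- iota 0 B].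

Definition mutually_indep (P : probability Omega R) (Z : nat -> Omega -> Theta * Xsp) :=
  forall (n : nat) (S : nat -> set (Theta * Xsp)),
    (forall i, measurable (S i)) ->
    P (\bigcap_(i in [set k | (k < n)%N]) (Z i @^-1` S i)) =
    (\prod_(i < n) P (Z i @^-1` S i))%E.

(* X independent of the whole sequence Z (tested on the generating pi-system
   of finite-dimensional cylinder events) *)
Definition indep_of_seq (P : probability Omega R) (X : Omega -> Xsp)
  (Z : nat -> Omega -> Theta * Xsp) :=
  forall (n : nat) (E : set Xsp) (S : nat -> set (Theta * Xsp)),
    measurable E -> (forall i, measurable (S i)) ->
    P (X @^-1` E `&` \bigcap_(i in [set k | (k < n)%N]) (Z i @^-1` S i)) =
    (P (X @^-1` E) * P (\bigcap_(i in [set k | (k < n)%N]) (Z i @^-1` S i)))%E.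

End TRUST.

(* Main.v *)
Require Import Defs.
From HB Require Import structures.
From mathcomp Require Import all_boot all_order all_algebra.
From mathcomp Require Import all_classical all_reals all_analysis.
Import Order.TTheory GRing.Theory Num.Theory.
Import numFieldNormedType.Exports.
Local Open Scope classical_set_scope.
Local Open Scope ring_scope.
From mathcomp Require Import lra.

Section cdf.
Context {R : realType} {dO : measure_display} {Omega : measurableType dO}.
Variable (P : probability Omega R) (T : Omega -> R).
Hypothesis mT : measurable_fun setT T.

Lemma mle t : measurable [set w | T w <= t].
Proof.
have := mT measurableT _ (measurable_itv `]-oo, t]).
rewrite setTI; congr measurable; apply/seteqP; split=> w /=; by rewrite in_itv.
Qed.

Lemma mgt t : measurable [set w | t < T w].
Proof.
have := mT measurableT _ (measurable_itv `]t, +oo[).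
rewrite setTI; congr measurable; apply/seteqP; split=> w /=; by rewrite in_itv /= andbT.
Qed.

Definition F t := fine (P [set w | T w <= t]).

Local Open Scope ereal_scope.
Lemma Pfin A : measurable A -> P A = (fine (P A))%:E.
Proof. by move=> mA; rewrite fineK // fin_num_measure. Qed.
Local Close Scope ereal_scope.

Lemma Fmono s t : s <= t -> F s <= F t.
Proof.
move=> st; rewrite /F; apply: fine_le; try exact/fin_num_measure/mle.
by apply: le_measure; try exact/mem_set/mle; move=> w /= h; apply: le_trans st.
Qed.

Lemma Pgt c : P [set w | c < T w] = (1 - F c)%:E.
Proof.
have -> : [set w | c < T w] = ~` [set w | T w <= c].
  by apply/seteqP; split=> w /=; rewrite ltNge => /negP.
rewrite probability_setC; last exact: mle.
by rewrite {1}(Pfin _ (mle c)).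
Qed.

Lemma cvgP1 (G : nat -> set Omega) : (forall n, measurable (G n)) ->
  nondecreasing_seq G -> \bigcup_n G n = setT ->
  (fun n => fine (P (G n))) @ \oo --> (1:R).
Proof.
move=> mG ndG UG.
have mU : measurable (\bigcup_n G n) by rewrite UG.
have e : P (\bigcup_n G n) = 1%E by rewrite UG probability_setT.
have : P \o G @ \oo --> (1%E : \bar R).
  by rewrite -e; exact: nondecreasing_cvg_mu.
by move/fine_cvgP => [].
Qed.

Lemma F_hi v : v < 1 -> exists b, v < F b.
Proof.
move=> v1.
have cv := cvgP1 (fun n : nat => [set w | T w <= n%:R]) (fun n => mle _) _ _.
have /cv{cv} : nondecreasing_seq (fun n : nat => [set w | T w <= n%:R]).
  by move=> m n mn; apply/subsetPset => w /= h; apply: le_trans h _; rewrite ler_nat.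
have /[swap]/[apply] : \bigcup_n [set w | T w <= n%:R] = setT.
  apply/seteqP; split=> w // _; exists (Num.bound `|T w|) => //=.
  apply: le_trans (ltW (archi_boundP (normr_ge0 _))); exact: ler_norm.
move/cvgrPdist_lt => /(_ (1 - v)); rewrite subr_gt0 => /(_ v1) /filter_ex [n /=].
move=> h; exists n%:R; rewrite /F.
move: h; rewrite ltr_norml => /andP[_]; rewrite ltrBlDr -ltrBlDl opprB addrC addrNK.
done.
Qed.

Lemma F_lo v : 0 < v -> exists a, F a < v.
Proof.
move=> v0.
have cv := cvgP1 (fun n : nat => [set w | - n%:R < T w]) (fun n => mgt _) _ _.
have /cv{cv} : nondecreasing_seq (fun n : nat => [set w | - n%:R < T w]).
  move=> m n mn; apply/subsetPset => w /= h; apply: le_lt_trans h.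
  by rewrite lerN2 ler_nat.
have /[swap]/[apply] : \bigcup_n [set w | - n%:R < T w] = setT.
  apply/seteqP; split=> w // _; exists (Num.bound `|T w|) => //=.
  rewrite ltrNl; apply: le_lt_trans (archi_boundP (normr_ge0 _)).
  by rewrite -normrN ler_norm.
move/cvgrPdist_lt => /(_ v v0) /filter_ex [n /=].
rewrite Pgt /= => h; exists (- n%:R).
by move: h; rewrite opprB addrC addrNK ger0_norm // /F; apply: fine_ge0; apply: measure_ge0.
Qed.

Lemma F_ivt v : 0 < v < 1 -> continuous F -> exists c, F c = v.
Proof.
move=> /andP[v0 v1] cF.
have [a Fa] := F_lo _ v0; have [b Fb] := F_hi _ v1.
have ab : a <= b.
  rewrite leNgt; apply/negP => ba; have := Fmono _ _ (ltW ba).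
  by rewrite leNgt (lt_trans Fa Fb).
have : Num.min (F a) (F b) <= v <= Num.max (F a) (F b).
  by rewrite ge_min ltW ?Fa //= le_max (ltW Fb) orbT.
move=> /(IVT ab (continuous_subspaceT cF)) [c _ Fc]; by exists c.
Qed.

End cdf.

Section pl.
Context {R : realType} {dO : measure_display} {Omega : measurableType dO}.
Variable (P : probability Omega R).

Lemma pmono (A B : set Omega) : measurable A -> measurable B -> A `<=` B ->
  fine (P A) <= fine (P B).
Proof.
move=> mA mB AB; apply: fine_le; try exact: fin_num_measure.
by apply: le_measure; rewrite ?inE.
Qed.

Lemma pU2 (A B : set Omega) : measurable A -> measurable B ->
  fine (P (A `|` B)) <= fine (P A) + fine (P B).
Proof.
move=> mA mB.
have fA := fin_num_measure P _ mA; have fB := fin_num_measure P _ mB.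
have fU := fin_num_measure P _ (measurableU _ _ mA mB).
rewrite -fineD //; apply: fine_le => //; first by rewrite fin_numD fA fB.
exact: measureU2.
Qed.

Lemma pC (A : set Omega) : measurable A -> fine (P (~` A)) = 1 - fine (P A).
Proof.
move=> mA; rewrite probability_setC // -[P A](fineK (fin_num_measure P _ mA)).
by rewrite -EFinB.
Qed.
End pl.

Section hh.
Context {R : realType} {dT dX : measure_display}
  {Theta : measurableType dT} {Xsp : measurableType dX}.
Variables (tau : Xsp -> Theta -> R) (cell : Theta -> nat)
  (sims : seq (Theta * Xsp)) (th : Theta) (alpha : R).

Lemma Hhat_mono s t : s <= t -> Hhat tau cell sims th s <= Hhat tau cell sims th t.
Proof.
move=> st; rewrite /Hhat ler_pM2r ?invr_gt0 ?ltr_wpDl // lerD2r ler_nat.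
apply: sub_count => z /andP[-> /= h]; exact: le_trans st.
Qed.

Lemma Rhat_of (x : Xsp) : alpha <= Hhat tau cell sims th (tau x th) ->
  Rhat alpha tau cell sims x th.
Proof. by move=> h; rewrite /Rhat /Chat /=; apply: ereal_inf_lbound; exists (tau x th). Qed.

Lemma Rhat_imp (x : Xsp) c : Rhat alpha tau cell sims x th -> tau x th < c ->
  alpha <= Hhat tau cell sims th c.
Proof.
rewrite /Rhat /Chat /= => h1 h2.
have : (ereal_inf (EFin @` [set t | (alpha <= Hhat tau cell sims th t)%R]) < c%:E)%E.
  by apply: le_lt_trans h1 _; rewrite lte_fin.
move=> /ereal_inf_lt [_ [s hs <-]]; rewrite lte_fin => sc.
exact: le_trans hs (Hhat_mono _ _ (ltW sc)).
Qed.
End hh.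
Arguments F_ivt {R dO Omega P T} mT {v}.
Arguments Fmono {R dO Omega P T} mT {s t}.
Arguments mle {R dO Omega T} mT t.
Arguments mgt {R dO Omega T} mT t.
Arguments Pgt {R dO Omega P T} mT c.
Arguments Pfin {R dO Omega P A}.
Arguments pC {R dO Omega P A}.
Arguments pmono {R dO Omega P A B}.
Arguments pU2 {R dO Omega P A B}.
Arguments Rhat_imp {R dT dX Theta Xsp tau cell sims th alpha x c}.
Arguments Rhat_of {R dT dX Theta Xsp tau cell sims th alpha x}.

Theorem theorem3 (R : realType) (dT dX dO : measure_display)
  (Theta : measurableType dT) (Xsp : measurableType dX) (Omega : measurableType dO)
  (P : probability Omega R)
  (model : R.-pker Theta ~> Xsp)
  (tau : Xsp -> Theta -> R) (alpha : R)
  (mu : {measure set Theta -> \bar R}) (r : Theta -> R)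
  (Z : nat -> Omega -> Theta * Xsp)
  (part : nat -> Omega -> Theta -> nat) :
  (0 < alpha < 1) ->
  measurable_fun setT (fun p : Xsp * Theta => tau p.1 p.2) ->
  (forall th, continuous (Hcdf model tau th)) ->
  (* prior r : a probability density w.r.t. mu, positive on Theta *)
  measurable_fun setT r ->
  (forall th, 0 < r th) ->
  (\int[mu]_(th in setT) (r th)%:E = 1)%E ->
  (* (theta_b, X_b) i.i.d., theta_b ~ r, X_b | theta_b ~ model theta_b *)
  (forall b, measurable_fun setT (Z b)) ->
  mutually_indep P Z ->
  (forall b (A : set Theta) (E : set Xsp), measurable A -> measurable E ->
     P (Z b @^-1` (A `*` E)) = (\int[mu]_(th in A) ((r th)%:E * model th E))%E) ->
  (* uniform consistency of \hat H_B *)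
  (forall eps delta : R, 0 < eps -> 0 < delta ->
     exists B0 : nat, forall B : nat, (B0 <= B)%N ->
       exists G : set Omega, measurable G /\ ((1 - delta)%:E <= P G)%E /\
         forall w, G w ->
           forall (t : R) (th' : Theta),
             `| Hhat tau (part B w) (first_sims Z B w) th' t - Hcdf model tau th' t |
               <= eps) ->
  forall (theta : Theta) (X : Omega -> Xsp),
    measurable_fun setT X ->
    (forall E, measurable E -> P (X @^-1` E) = model theta E) ->
    indep_of_seq P X Z ->
    (forall B : nat, measurable
       [set w | Rhat alpha tau (part B w) (first_sims Z B w) (X w) theta]) ->
    (fun B : nat =>
       fine (P [set w | Rhat alpha tau (part B w) (first_sims Z B w) (X w) theta]))
      @ \oo --> 1 - alpha.
Proof.
move=> /andP[a0 a1] mtau cH mr rpos rint mZ indZ lawZ cons theta X mX hX indX mE.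
pose T := fun w => tau (X w) theta.
have mtx : measurable_fun setT (fun x => tau x theta).
  exact: (measurableT_comp mtau (pair2_measurable theta)).
have mT : measurable_fun setT T := measurableT_comp mtx mX.
have HF t : Hcdf model tau theta t = F P T t.
  rewrite /Hcdf /F -hX //.
exact: mle.
have cF : continuous (F P T).
  have -> : F P T = Hcdf model tau theta by apply/funext=> s; rewrite HF.
  exact: cH.
apply/cvgrPdist_le => g g0.
pose eps := Num.min (g / 4) (Num.min ((1 - alpha) / 2) (alpha / 4)).
have e1 : eps <= g / 4 by rewrite /eps ge_min lexx.
have e2 : eps <= (1 - alpha) / 2 by rewrite /eps !ge_min lexx orbT.
have e3 : eps <= alpha / 4 by rewrite /eps !ge_min lexx !orbT.
have e0 : 0 < eps.
  rewrite /eps !lt_min; apply/and3P; split; lra.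
have [chi Fchi] := F_ivt mT (v := alpha + eps) ltac:(apply/andP; split; lra) cF.
have [c1 Fc1] := F_ivt mT (v := alpha - 3 * eps) ltac:(apply/andP; split; lra) cF.
have [c2 Fc2] := F_ivt mT (v := alpha - 2 * eps) ltac:(apply/andP; split; lra) cF.
have c12 : c1 < c2.
  rewrite ltNge; apply/negP => h; have := Fmono (P := P) mT (s := c2) (t := c1) h.
  rewrite Fc1 Fc2; lra.
have [B0 HB0] := cons eps (g / 4) e0 ltac:(lra).
exists B0 => // B /= hB.
have [G [mG [PG HG]]] := HB0 B hB.
pose E := [set w | Rhat alpha tau (part B w) (first_sims Z B w) (X w) theta].
have mEB : measurable E := mE B.
have pG : 1 - g / 4 <= fine (P G).
  by move: PG; rewrite (Pfin mG) lee_fin.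
have pGc : fine (P (~` G)) <= g / 4 by rewrite pC //; lra.
have mGc : measurable (~` G) by exact: measurableC.
have low : 1 - (alpha + eps) <= fine (P E) + g / 4.
  have : fine (P [set w | chi < T w]) <= fine (P (E `|` ~` G)).
    apply: pmono; [exact: (mgt mT)|exact: measurableU|].
    move=> w /= hw; have [Gw|nGw] := pselect (G w); [left|by right].
    apply: Rhat_of.
    have := HG w Gw (T w) theta; rewrite HF ler_norml => /andP[h1 h2].
    have := Fmono (P := P) mT (ltW hw); rewrite Fchi => h3.
    rewrite /T in h1 h2 h3 *; lra.
  rewrite (Pgt mT) Fchi /= => h.
  apply: le_trans h _; apply: le_trans (pU2 mEB mGc) _; lra.
have upp : fine (P E) <= 1 - (alpha - 3 * eps) + g / 4.
  have : fine (P E) <= fine (P ([set w | c1 < T w] `|` ~` G)).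
    apply: pmono; [exact: mEB|apply: measurableU; [exact: (mgt mT)|exact: mGc]|].
    move=> w /= hw; have [Gw|nGw] := pselect (G w); [left|by right].
    rewrite ltNge; apply/negP => hle.
    have := Rhat_imp hw (le_lt_trans hle c12).
    have := HG w Gw c2 theta; rewrite HF Fc2 ler_norml => /andP[h1 h2].
    lra.
  move=> h; apply: le_trans h _; apply: le_trans (pU2 (mgt mT c1) mGc) _.
  rewrite (Pgt mT) Fc1 /=; lra.
rewrite ler_norml; apply/andP; split; lra.
Qed.
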